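(* Let $F$ be a field of characteristic $2$ and let $K=F(\lambda)$ be a separable extension with $\lambda\neq0$ and $[K:F]=n$. Let $f(X)=X^n+a_1X^{n-1}+\dots+a_n$ be the minimal polynomial of $\lambda$ over $F$, and let $a=a_k$ for some odd $k\in\{1,\dots,n\}$ with $a_k\neq0$ (such a $k$ exists). Let $s:K\to F$ be the $F$-linear functional with $s(1)=1$ and $s(\lambda^i)=0$ for $1\le i\le n-1$. Let $\phi,\psi$ be totally singular quadratic forms over $F$ with $\phi_K\cong\lambda\psi_K$. Then $G_F^0(\phi)=G_F^0(\psi)$ and $G_F^0(\phi,\psi)=aG_F^0(\psi)$. For every integer $m\ge0$, - $s(\lambda^m)\in G_F^0(\psi)$ if $m$ is even; - $s(\lambda^m)\in G_F^0(\phi,\psi)$ if $m$ is odd. Moreover, $$\phi\sim s_*(\phi_K)\cong s_*(\lambda\psi_K)\sim a\psi .$$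
   Context: Transfer: for a quadratic form $\phi$ on a $K$-vector space $V$, $s_*(\phi)=s\circ\phi$ on $V$ regarded as an $F$-vector space. For forms of equal dimension, $G_F(\phi,\psi)=\{c\in F^*:\phi\cong c\psi\}$, $G_F(\psi)=G_F(\psi,\psi)$, and $G^0_F(\cdot)=G_F(\cdot)\cup\{0\}$. A totally singular quadratic form is one isometric to $\sum a_ix_i^2$. Its anisotropic part is obtained by removing a maximal zero subform $\langle0,\dots,0\rangle$, and $\sim$ denotes Witt equivalence, i.e. isometry of anisotropic parts. *)

(* Defs.v *)
From HB Require Import structures.
From mathcomp Require Import all_boot all_order all_algebra all_field.
Set Implicit Arguments. Unset Strict Implicit. Unset Printing Implicit Defensive.
Import GRing.Theory.
Local Open Scope ring_scope.

Section QuadForms.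
Variable R : fieldType.

Definition qiso (V W : vectType R) (q1 : V -> R) (q2 : W -> R) : Prop :=
  exists f : {linear V -> W}, bijective f /\ forall v, q2 (f v) = q1 v.

Definition qscale (V : vectType R) (c : R) (q : V -> R) : V -> R :=
  fun v => c * q v.

Definition qsum (V W : vectType R) (q1 : V -> R) (q2 : W -> R) : V * W -> R :=
  fun p => q1 p.1 + q2 p.2.

Definition qzero (i : nat) : 'rV[R]_i -> R := fun _ => 0.

Definition anisotropic (V : vectType R) (q : V -> R) : Prop :=
  forall v, q v = 0 -> v = 0.

Definition witt_equiv (V W : vectType R) (q1 : V -> R) (q2 : W -> R) : Prop :=
  exists (e i j : nat) (rho : 'rV[R]_e -> R),
    [/\ anisotropic rho, qiso q1 (qsum rho (@qzero i))
      & qiso q2 (qsum rho (@qzero j))].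

Definition G0 (V W : vectType R) (q1 : V -> R) (q2 : W -> R) (c : R) : Prop :=
  c = 0 \/ (c != 0 /\ qiso q1 (qscale c q2)).

Definition ts_form (d : nat) (a : 'rV[R]_d) : 'rV[R]_d -> R :=
  fun x => \sum_(i < d) a 0 i * x 0 i ^+ 2.
End QuadForms.

Definition ts_ext (F : fieldType) (L : fieldExtType F) (d : nat)
  (a : 'rV[F]_d) : {ffun 'I_d -> L} -> L :=
  fun x => \sum_(i < d) in_alg L (a 0 i) * x i ^+ 2.

Definition transfer (F : fieldType) (L : fieldExtType F) (V : Type)
  (s : L -> F) (q : V -> L) : V -> F := fun v => s (q v).

(* Main.v *)
Require Import Defs.
From HB Require Import structures.
From mathcomp Require Import all_boot all_order all_algebra all_field.
From Stdlib Require Import Classical.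
Import GRing.Theory.
Local Open Scope ring_scope.
Set Implicit Arguments. Unset Strict Implicit. Unset Printing Implicit Defensive.

Section Char2.
Variable R : comNzRingType.
Hypothesis ch : (2%N \in [pchar R]).
Lemma sqrD2 (x y : R) : (x + y) ^+ 2 = x ^+ 2 + y ^+ 2.
Proof. by rewrite sqrrD -mulr_natr (pcharf0 ch) mulr0 addr0. Qed.
Lemma oppr2 (x : R) : - x = x.
Proof. by apply/eqP; rewrite eq_sym -subr_eq0 opprK -mulr2n -mulr_natr (pcharf0 ch) mulr0. Qed.
End Char2.

Section QL.
Variable F : fieldType.
Hypothesis ch : (2%N \in [pchar F]).

Definition Img {V : Type} (q : V -> F) (z : F) := exists v, z = q v.

Lemma mklin (V W : vectType F) (f : V -> W) :
  (forall a x y, f (a *: x + y) = a *: f x + f y) ->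
  exists g : {linear V -> W}, forall x, g x = f x.
Proof.
move=> H.
pose g : {linear V -> W} := HB.pack f (GRing.isLinear.Build _ _ _ _ f H).
by exists g.
Qed.

Lemma tsD d (b x y : 'rV[F]_d) : ts_form b (x + y) = ts_form b x + ts_form b y.
Proof.
rewrite /ts_form -big_split; apply: eq_bigr => i _.
by rewrite mxE sqrD2 // mulrDr.
Qed.

Lemma tsZ d (b x : 'rV[F]_d) c : ts_form b (c *: x) = c ^+ 2 * ts_form b x.
Proof.
rewrite /ts_form mulr_sumr; apply: eq_bigr => i _.
by rewrite mxE exprMn mulrCA.
Qed.

Lemma ts0 d (b : 'rV[F]_d) : ts_form b 0 = 0.
Proof. by rewrite /ts_form big1 // => i _; rewrite mxE expr0n mulr0. Qed.

Lemma ts_sum d (b : 'rV[F]_d) m (G : 'I_m -> 'rV[F]_d) :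
  ts_form b (\sum_i G i) = \sum_i ts_form b (G i).
Proof. by apply: (big_morph (ts_form b)); [exact: tsD | exact: ts0]. Qed.

Lemma ts_mul e r (b : 'rV[F]_e) (c : 'rV[F]_r) (Y : 'M[F]_(e, r)) :
  (forall i, ts_form c (row i Y) = b 0 i) ->
  forall x, ts_form b x = ts_form c (x *m Y).
Proof.
move=> HY x; rewrite mulmx_sum_row ts_sum /ts_form; apply: eq_bigr => i _.
by rewrite -/(ts_form _ _) tsZ HY mulrC.
Qed.

Lemma ts_factor e r (b : 'rV[F]_e) (c : 'rV[F]_r) :
  (forall i, Img (ts_form c) (b 0 i)) ->
  exists Y : 'M[F]_(e, r), forall x, ts_form b x = ts_form c (x *m Y).
Proof.
move=> H; have [g Hg] := fin_all_exists H.
exists (\matrix_i g i); apply: ts_mul => i; by rewrite rowK Hg.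
Qed.

Lemma aniso_free e r (b : 'rV[F]_e) (c : 'rV[F]_r) (Y : 'M[F]_(e, r)) :
  anisotropic (ts_form b) -> (forall x, ts_form b x = ts_form c (x *m Y)) ->
  row_free Y.
Proof.
move=> an HY; rewrite -kermx_eq0; apply/eqP/row_matrixP => i; rewrite row0.
apply: an; rewrite HY -row_mul mulmx_ker row0 ts0 //.
Qed.

Lemma aniso_le e r (b : 'rV[F]_e) (c : 'rV[F]_r) :
  anisotropic (ts_form b) -> (forall i, Img (ts_form c) (b 0 i)) -> (e <= r)%N.
Proof.
move=> an /ts_factor[Y HY]; have := aniso_free an HY; rewrite /row_free => /eqP <-.
exact: rank_leq_col.
Qed.

Lemma ts_img_gen d r (b : 'rV[F]_d) (c : 'rV[F]_r) :
  (forall i, Img (ts_form c) (b 0 i)) -> forall z, Img (ts_form b) z -> Img (ts_form c) z.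
Proof.
move=> /ts_factor[Y HY] z [x ->]; exists (x *m Y); exact: HY.
Qed.

Lemma ts_coef d (b : 'rV[F]_d) i : Img (ts_form b) (b 0 i).
Proof.
exists (delta_mx 0 i); rewrite /ts_form (bigD1 i) //= big1 ?addr0.
  by rewrite mxE !eqxx expr1n mulr1.
by move=> j /negPf nji; rewrite mxE nji /= expr0n mulr0.
Qed.

Lemma aniso_sq e (b c : 'rV[F]_e) :
  anisotropic (ts_form b) -> anisotropic (ts_form c) ->
  (forall z, Img (ts_form b) z -> Img (ts_form c) z) ->
  exists2 Y : 'M[F]_e, Y \in unitmx & forall x, ts_form b x = ts_form c (x *m Y).
Proof.
move=> anb anc sub.
have [Y HY] := ts_factor (fun i => sub _ (ts_coef b i)).
by exists Y => //; rewrite -row_free_unit; exact: aniso_free HY.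
Qed.

Lemma ts_split m n (b x : 'rV[F]_(m + n)) :
  ts_form b x = ts_form (lsubmx b) (lsubmx x) + ts_form (rsubmx b) (rsubmx x).
Proof.
rewrite /ts_form big_split_ord /=; congr (_ + _); apply: eq_bigr => i _; by rewrite !mxE.
Qed.

Lemma ts_row m n (b1 x1 : 'rV[F]_m) (b2 x2 : 'rV[F]_n) :
  ts_form (row_mx b1 b2) (row_mx x1 x2) = ts_form b1 x1 + ts_form b2 x2.
Proof. by rewrite ts_split !row_mxKl !row_mxKr. Qed.

Lemma ts1 (b u : 'rV[F]_1) : ts_form b u = b 0 0 * u 0 0 ^+ 2.
Proof. by rewrite /ts_form big_ord1. Qed.

Lemma mul1row n (u : 'rV[F]_1) (y : 'rV[F]_n) : u *m y = u 0 0 *: y.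
Proof. by rewrite {1}[u]mx11_scalar mul_scalar_mx. Qed.

Lemma decomp d (b : 'rV[F]_d) : exists e (c : 'rV[F]_e) (Y : 'M[F]_(d, e))
  (Yi : 'M[F]_(e, d)), [/\ anisotropic (ts_form c), Yi *m Y = 1%:M
     & forall x, ts_form b x = ts_form c (x *m Y)].
Proof.
elim: d b => [|d IH] b.
  exists 0%N, 0, 0, 0; split.
  - by move=> v _; rewrite [v]thinmx0.
  - by rewrite [LHS]flatmx0 [RHS]flatmx0.
  - by move=> x; rewrite /ts_form !big_ord0.
revert b; change (forall b : 'rV[F]_(1 + d), exists e (c : 'rV[F]_e)
  (Y : 'M[F]_(1 + d, e)) (Yi : 'M[F]_(e, 1 + d)), [/\ anisotropic (ts_form c),
   Yi *m Y = 1%:M & forall x, ts_form b x = ts_form c (x *m Y)]) => b.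
have [e [c [Y [Yi [anc YiY HY]]]]] := IH (rsubmx b).
have Hb : forall x : 'rV_(1 + d), ts_form b x =
   lsubmx b 0 0 * lsubmx x 0 0 ^+ 2 + ts_form c (rsubmx x *m Y).
  by move=> x; rewrite (ts_split b x) ts1 HY.
case: (classic (Img (ts_form c) (lsubmx b 0 0))) => [[y0 Hy0]|nI].
  exists e, c, (col_mx y0 Y), (row_mx 0 Yi); split => //.
    by rewrite mul_row_col mul0mx add0r.
  move=> x; rewrite Hb -[x in RHS]hsubmxK mul_row_col tsD mul1row tsZ -Hy0.
  by rewrite mulrC.
exists (1 + e)%N, (row_mx (lsubmx b) c), (block_mx 1%:M 0 0 Y),
  (block_mx 1%:M 0 0 Yi); split.
- move=> z; rewrite -[z]hsubmxK ts_row ts1.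
  set z0 := lsubmx z 0 0; set zr := rsubmx z.
  have [z00|z0n] := eqVneq z0 0.
    rewrite z00 expr0n mulr0 add0r => /anc ->.
    have -> : lsubmx z = 0 by apply/rowP => i; rewrite ord1 [RHS]mxE; exact: z00.
    by rewrite row_mx0.
  move=> H; exfalso; apply: nI; exists (z0^-1 *: zr).
  rewrite tsZ; move/eqP: H; rewrite addr_eq0 oppr2 // => /eqP <-.
  by rewrite exprVn mulrCA mulVf ?mulr1 // expf_neq0.
- by rewrite mulmx_block !mulmx0 !mul0mx !addr0 !add0r mulmx1 YiY -scalar_mx_block.
- move=> x; rewrite Hb -[x in RHS]hsubmxK mul_row_block !mulmx0 !mulmx1 addr0 add0r.
  by rewrite ts_row ts1.
Qed.
End QL.

Section Iso.
Variable F : fieldType.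

Lemma qiso_sym (V W : vectType F) (q1 : V -> F) (q2 : W -> F) :
  qiso q1 q2 -> qiso q2 q1.
Proof.
move=> [f [[g fK gK] Hf]].
have [h Hh] : exists h : {linear W -> V}, forall x, h x = g x.
  apply: mklin => a x y; apply: (can_inj fK).
  by rewrite linearP /= !gK.
exists h; split; first by exists f => x; rewrite Hh ?fK ?gK.
by move=> v; rewrite Hh -Hf gK.
Qed.

Lemma qiso_trans (U V W : vectType F) (q1 : U -> F) (q2 : V -> F) (q3 : W -> F) :
  qiso q1 q2 -> qiso q2 q3 -> qiso q1 q3.
Proof.
move=> [f [[f' fK f'K] Hf]] [g [[g' gK g'K] Hg]].
have [h Hh] : exists h : {linear U -> W}, forall x, h x = g (f x).
  by apply: mklin => a x y; rewrite !linearP.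
exists h; split; last by move=> v; rewrite Hh Hg Hf.
by exists (fun w => f' (g' w)) => x; rewrite ?Hh ?gK ?fK ?f'K ?g'K.
Qed.

Lemma qiso_ext (V W : vectType F) (q1 : V -> F) (q2 q2' : W -> F) :
  q2 =1 q2' -> qiso q1 q2 -> qiso q1 q2'.
Proof. by move=> e [f [bf Hf]]; exists f; split => // v; rewrite -e. Qed.

Lemma qiso_ext1 (V W : vectType F) (q1 q1' : V -> F) (q2 : W -> F) :
  q1 =1 q1' -> qiso q1 q2 -> qiso q1' q2.
Proof. by move=> e [f [bf Hf]]; exists f; split => // v; rewrite -e. Qed.

Lemma qiso_refl (V : vectType F) (q : V -> F) : qiso q q.
Proof.
have [h Hh] : exists h : {linear V -> V}, forall x, h x = x.
  by apply: mklin.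
by exists h; split; [exists id => x; rewrite Hh | move=> v; rewrite Hh].
Qed.

Lemma qiso_sum (V V' W : vectType F) (q1 : V -> F) (q1' : V' -> F) (q2 : W -> F) :
  qiso q1 q1' -> qiso (qsum q1 q2) (qsum q1' q2).
Proof.
move=> [f [[f' fK f'K] Hf]].
have [h Hh] : exists h : {linear (V * W)%type -> (V' * W)%type}, forall x, h x = (f x.1, x.2).
  by apply: mklin => a [x1 x2] [y1 y2] /=; rewrite linearP.
exists h; split; last by move=> [v w]; rewrite Hh /qsum /= Hf.
by exists (fun x => (f' x.1, x.2)) => -[x1 x2]; rewrite ?Hh /= ?fK ?f'K.
Qed.

Lemma qiso_mx m n (b : 'rV[F]_m -> F) (c : 'rV[F]_n -> F) (M : 'M[F]_(m, n))
  (N : 'M[F]_(n, m)) :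
  M *m N = 1%:M -> N *m M = 1%:M -> (forall x, b x = c (x *m M)) -> qiso b c.
Proof.
move=> MN NM H.
have [h Hh] : exists h : {linear 'rV[F]_m -> 'rV[F]_n}, forall x, h x = x *m M.
  by apply: mklin => a x y; rewrite mulmxDl scalemxAl.
exists h; split; last by move=> v; rewrite Hh H.
by exists (fun y => y *m N) => x; rewrite ?Hh -mulmxA ?MN ?NM mulmx1.
Qed.
End Iso.

Section Class.
Variable F : fieldType.
Hypothesis ch : (2%N \in [pchar F]).

Lemma decomp_img d e (b : 'rV[F]_d) (c : 'rV[F]_e) Y (Yi : 'M[F]_(e, d)) :
  Yi *m Y = 1%:M -> (forall x, ts_form b x = ts_form c (x *m Y)) ->
  forall z, Img (ts_form b) z <-> Img (ts_form c) z.
Proof.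
move=> YiY H z; split=> [[x ->]|[y ->]]; first by exists (x *m Y).
by exists (y *m Yi); rewrite H -mulmxA YiY mulmx1.
Qed.

Lemma decomp_iso d e (b : 'rV[F]_d) (c : 'rV[F]_e) Y (Yi : 'M[F]_(e, d)) :
  Yi *m Y = 1%:M -> (forall x, ts_form b x = ts_form c (x *m Y)) ->
  exists i, (e + i = d)%N /\ qiso (ts_form b) (qsum (ts_form c) (@qzero F i)).
Proof.
move=> YiY H.
have rY : \rank Y = e.
  apply/eqP; rewrite eqn_leq rank_leq_col /=.
  by rewrite -{1}(mxrank1 F e) -YiY mxrankM_maxr.
set B := row_base (kermx Y); exists (\rank (kermx Y)); split.
  by rewrite mxrank_ker rY subnKC // -rY rank_leq_row.
set P := 1%:M - Y *m Yi; set Z := pinvmx B.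
have BY : B *m Y = 0 by apply/sub_kermxP; rewrite eq_row_base.
have PY : P *m Y = 0 by rewrite mulmxBl mul1mx -mulmxA YiY mulmx1 subrr.
have BZ : B *m Z = 1%:M by rewrite mulmxVp // row_base_free.
have [h Hh] : exists h : {linear 'rV[F]_d -> ('rV[F]_e * 'rV[F]_(\rank (kermx Y)))%type},
    forall x, h x = (x *m Y, x *m P *m Z).
  by apply: mklin => a x y; rewrite !mulmxDl -!scalemxAl.
exists h; split; last by move=> v; rewrite Hh /qsum /qzero /= H addr0.
exists (fun u => u.1 *m Yi + u.2 *m B) => [x|[u v]]; rewrite ?Hh /=.
  have xP : (x *m P <= B)%MS by rewrite eq_row_base; apply/sub_kermxP; rewrite -mulmxA PY mulmx0.
  rewrite (mulmxKpV xP) /P mulmxBr mulmx1 mulmxA addrC subrK //.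
congr (_, _).
  by rewrite mulmxDl -(mulmxA u Yi Y) -(mulmxA v B Y) YiY BY mulmx0 addr0 mulmx1.
rewrite !mulmxDl /P !mulmxBr !mulmx1 (mulmxA (u *m Yi)) -(mulmxA u Yi Y) YiY mulmx1.
rewrite subrr mul0mx add0r (mulmxA (v *m B)) -(mulmxA v B Y) BY mulmx0 mul0mx subr0.
by rewrite -mulmxA BZ mulmx1.
Qed.

Lemma ts_decomp d (b : 'rV[F]_d) : exists e (c : 'rV[F]_e) i,
  [/\ anisotropic (ts_form c), (e + i = d)%N,
      (forall z, Img (ts_form b) z <-> Img (ts_form c) z)
    & qiso (ts_form b) (qsum (ts_form c) (@qzero F i))].
Proof.
have [e [c [Y [Yi [an YiY H]]]]] := decomp ch b.
have [i [ei iso]] := decomp_iso YiY H.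
by exists e, c, i; split => //; exact: decomp_img YiY H.
Qed.

Lemma aniso_same e1 e2 (c1 : 'rV[F]_e1) (c2 : 'rV[F]_e2) :
  anisotropic (ts_form c1) -> anisotropic (ts_form c2) ->
  (forall z, Img (ts_form c1) z <-> Img (ts_form c2) z) -> e1 = e2.
Proof.
move=> a1 a2 eq; apply/eqP; rewrite eqn_leq.
rewrite (aniso_le ch a1 (fun i => proj1 (eq _) (ts_coef c1 i))).
by rewrite (aniso_le ch a2 (fun i => proj2 (eq _) (ts_coef c2 i))).
Qed.

Lemma aniso_iso e (c1 c2 : 'rV[F]_e) :
  anisotropic (ts_form c1) -> anisotropic (ts_form c2) ->
  (forall z, Img (ts_form c1) z <-> Img (ts_form c2) z) ->
  qiso (ts_form c1) (ts_form c2).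
Proof.
move=> a1 a2 eq; have [Y uY HY] := aniso_sq ch a1 a2 (fun z => proj1 (eq z)).
by apply: (qiso_mx (N := invmx Y)) HY; rewrite ?mulmxV ?mulVmx.
Qed.

Lemma ts_witt d1 d2 (b1 : 'rV[F]_d1) (b2 : 'rV[F]_d2) :
  (forall z, Img (ts_form b1) z <-> Img (ts_form b2) z) ->
  witt_equiv (ts_form b1) (ts_form b2).
Proof.
move=> eq.
have [e1 [c1 [i1 [a1 _ E1 I1]]]] := ts_decomp b1.
have [e2 [c2 [i2 [a2 _ E2 I2]]]] := ts_decomp b2.
have E : forall z, Img (ts_form c2) z <-> Img (ts_form c1) z.
  by move=> z; rewrite -E1 -E2 eq.
have ee := aniso_same a2 a1 E; subst e2.
exists e1, i1, i2, (ts_form c1); split => //.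
exact: qiso_trans I2 (qiso_sum _ (aniso_iso a2 a1 E)).
Qed.

Lemma ts_iso d1 d2 (b1 : 'rV[F]_d1) (b2 : 'rV[F]_d2) :
  d1 = d2 -> (forall z, Img (ts_form b1) z <-> Img (ts_form b2) z) ->
  qiso (ts_form b1) (ts_form b2).
Proof.
move=> dd eq.
have [e1 [c1 [i1 [a1 s1 E1 I1]]]] := ts_decomp b1.
have [e2 [c2 [i2 [a2 s2 E2 I2]]]] := ts_decomp b2.
have E : forall z, Img (ts_form c2) z <-> Img (ts_form c1) z.
  by move=> z; rewrite -E1 -E2 eq.
have ee := aniso_same a2 a1 E; subst e2.
have ii : i1 = i2 by apply/eqP; rewrite -(eqn_add2l e1) s1 s2 dd.
subst i2.
apply: qiso_trans I1 _; apply: qiso_sym.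
exact: qiso_trans I2 (qiso_sum _ (aniso_iso a2 a1 E)).
Qed.

Lemma qiso_img (V W : vectType F) (q1 : V -> F) (q2 : W -> F) :
  qiso q1 q2 -> forall z, Img q1 z <-> Img q2 z.
Proof.
move=> [f [[g fK gK] Hf]] z; split => [[v ->]|[w ->]]; first by exists (f v).
by exists (g w); rewrite -Hf gK.
Qed.

Lemma qlin_ts (V : vectType F) (q : V -> F) :
  (forall x y, q (x + y) = q x + q y) -> (forall c x, q (c *: x) = c ^+ 2 * q x) ->
  exists b : 'rV[F]_(\dim {:V}), qiso q (ts_form b).
Proof.
move=> qD qZ; set X := vbasis {:V}.
have fX : free X by exact: basis_free (vbasisP _).
have q0 : q 0 = 0 by have := qZ 0 0; rewrite scale0r expr0n mul0r.
have qS : forall m (G : 'I_m -> V), q (\sum_i G i) = \sum_i q (G i).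
  by move=> m G; apply: (big_morph q qD q0).
exists (\row_i q X`_i).
have [h Hh] : exists h : {linear V -> 'rV[F]_(\dim {:V})},
    forall v, h v = \row_i coord X i v.
  by apply: mklin => a x y; apply/rowP => i; rewrite !mxE linearP.
exists h; split.
  exists (fun r : 'rV[F]_(\dim {:V}) => \sum_i r 0 i *: X`_i) => [v|r].
    by rewrite Hh [RHS](coord_vbasis (memvf v)); apply: eq_bigr => i _; rewrite mxE.
  by rewrite Hh; apply/rowP => i; rewrite mxE coord_sum_free.
move=> v; rewrite Hh {2}(coord_vbasis (memvf v)) qS /ts_form; apply: eq_bigr => i _.
by rewrite !mxE qZ mulrC.
Qed.
End Class.


Section Basis.
Variables (F : fieldType) (L : fieldExtType F) (n : nat).
Hypothesis dimL : \dim {:L} = n.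

Definition ptup (y : L) : n.-tuple L := [tuple y ^+ i | i < n].

Lemma ptupE y (i : 'I_n) : (ptup y)`_i = y ^+ i.
Proof. by rewrite nth_mktuple. Qed.

Lemma adj_deg (y : L) : <<1; y>>%VS = fullv -> adjoin_degree 1 y = n.
Proof.
move=> gy; rewrite adjoin_degreeE gy dimv1 divn1 -dimL //.
Qed.

Lemma ptup_basis (y : L) : <<1; y>>%VS = fullv -> basis_of fullv (ptup y).
Proof.
move=> gy; rewrite basisEfree subvf size_tuple dimL leqnn !andbT.
apply/freeP => k Hk i.
pose kn (j : nat) := odflt 0 (omap k (insub j)).
have knE : forall j : 'I_n, kn j = k j by move=> j; rewrite /kn valK.
pose p := \poly_(i < n) (kn i)%:A : {poly L}.
have pO : p \is a polyOver 1%VS.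
  apply/polyOverP => j; rewrite coef_poly; case: ifP => _; last exact: mem0v.
  by rewrite rpredZ // mem1v.
have rp : root p y.
  rewrite /root horner_poly; apply/eqP; rewrite -[RHS]Hk.
  by apply: eq_bigr => j _; rewrite knE ptupE mulr_algl.
have p0 : p = 0.
  apply/eqP; apply: contraT => pn0.
  have := dvdp_leq pn0 (minPoly_dvdp pO rp).
  by rewrite size_minPoly adj_deg // ltnNge (leq_trans (size_poly _ _)) ?leqnn.
have := congr1 (fun q : {poly L} => q`_i) p0.
rewrite coef_poly ltn_ord coef0 knE => /eqP.
by rewrite scaler_eq0 oner_eq0 orbF => /eqP.
Qed.

Lemma ptup_free y : <<1; y>>%VS = fullv -> free (ptup y).
Proof. by move/ptup_basis/basis_free. Qed.

Lemma ptup_expand y (x : L) : <<1; y>>%VS = fullv ->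
  x = \sum_i coord (ptup y) i x *: y ^+ i.
Proof.
move=> gy; rewrite {1}(coord_basis (ptup_basis gy) (memvf x)).
by apply: eq_bigr => i _; rewrite ptupE.
Qed.

Lemma ptup_coord y (k : 'I_n -> F) j : <<1; y>>%VS = fullv ->
  coord (ptup y) j (\sum_i k i *: y ^+ i) = k j.
Proof.
move=> gy; rewrite -(coord_sum_free k j (ptup_free gy)).
by congr coord; apply: eq_bigr => i _; rewrite ptupE.
Qed.

Lemma ptup_eq y (x x' : L) : <<1; y>>%VS = fullv ->
  (forall i, coord (ptup y) i x = coord (ptup y) i x') -> x = x'.
Proof.
move=> gy H; rewrite (ptup_expand x gy) (ptup_expand x' gy).
by apply: eq_bigr => i _; rewrite H.
Qed.

Lemma ptup_alg y (c : F) j : <<1; y>>%VS = fullv -> (0 < n)%N ->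
  coord (ptup y) j c%:A = c * (val j == 0%N)%:R.
Proof.
move=> gy n0.
have -> : c%:A = \sum_(i < n) (c * (val i == 0%N)%:R) *: y ^+ i.
  rewrite (bigD1 (Ordinal n0)) //= big1 ?addr0 ?eqxx ?mulr1 ?expr0 //.
  move=> i ni; have -> : (val i == 0%N) = false.
    by apply/negbTE; apply: contra ni => /eqP e; apply/eqP/val_inj.
  by rewrite mulr0 scale0r.
by rewrite ptup_coord.
Qed.
End Basis.

Section Coords.
Variables (F : fieldType) (L : fieldExtType F) (lam : L) (n : nat).
Hypotheses (chF : 2%N \in [pchar F]) (gen : <<1; lam>>%VS = fullv)
  (sep : separable_element 1 lam) (dimL : \dim {:L} = n).

Lemma chL : 2%N \in [pchar L].
Proof. exact: (rmorph_pchar (in_alg L) chF). Qed.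

Lemma gen2 : <<1; lam ^+ 2>>%VS = fullv.
Proof.
have := sep; rewrite (@pcharf_p_separable _ _ _ _ 0 2 chL) expn1 => H.
apply/eqP; rewrite eqEsubv subvf /= -gen.
by rewrite sub_adjoin1v.
Qed.

Local Notation c2 := (coord (ptup n (lam ^+ 2))).
Local Notation pc := (coord (ptup n lam)).

Lemma sqr_sum m (G : 'I_m -> L) : (\sum_i G i) ^+ 2 = \sum_i G i ^+ 2.
Proof.
apply: (big_morph (fun x : L => x ^+ 2)); first by move=> x y; rewrite sqrD2 // chL.
by rewrite expr0n.
Qed.

Lemma ts_map_calc d (b : 'rV[F]_d) (T : 'I_d -> 'I_n -> F) :
  ts_form (map_mx (in_alg L) b) (\row_i \sum_j T i j *: lam ^+ j) =
  \sum_j ts_form b (\row_i T i j) *: (lam ^+ 2) ^+ j.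
Proof.
rewrite /ts_form.
transitivity (\sum_i \sum_j (b 0 i * T i j ^+ 2) *: (lam ^+ 2) ^+ j).
  apply: eq_bigr => i _; rewrite !mxE sqr_sum mulr_sumr; apply: eq_bigr => j _.
  by rewrite exprZn mulr_algl scalerA exprAC.
rewrite exchange_big /=; apply: eq_bigr => j _; rewrite scaler_suml.
by apply: eq_bigr => i _; rewrite mxE.
Qed.

Lemma imgL d (b : 'rV[F]_d) (x : L) :
  Img (ts_form (map_mx (in_alg L) b)) x <-> forall j, Img (ts_form b) (c2 j x).
Proof.
split.
  move=> [y ->] j.
  have -> : y = \row_i \sum_j pc j (y 0 i) *: lam ^+ j.
    by apply/rowP => i; rewrite mxE -ptup_expand.
  rewrite ts_map_calc ptup_coord ?gen2 //.
  by exists (\row_i pc j (y 0 i)).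
move=> H; have [z Hz] := fin_all_exists H.
exists (\row_i \sum_j z j 0 i *: lam ^+ j).
rewrite ts_map_calc; rewrite {1}(ptup_expand dimL x gen2).
by apply: eq_bigr => j _; rewrite Hz; congr (ts_form _ _ *: _); apply/rowP => i; rewrite mxE.
Qed.
End Coords.

Section ImgClos.
Variable F : fieldType.
Hypothesis ch : 2%N \in [pchar F].

Lemma img0 d (b : 'rV[F]_d) : Img (ts_form b) 0.
Proof. by exists 0; rewrite ts0. Qed.

Lemma imgD d (b : 'rV[F]_d) z1 z2 : Img (ts_form b) z1 -> Img (ts_form b) z2 ->
  Img (ts_form b) (z1 + z2).
Proof. by move=> [x ->] [y ->]; exists (x + y); rewrite tsD. Qed.

Lemma imgZ d (b : 'rV[F]_d) t z : Img (ts_form b) z -> Img (ts_form b) (t ^+ 2 * z).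
Proof. by move=> [x ->]; exists (t *: x); rewrite tsZ. Qed.

Lemma img_sum d (b : 'rV[F]_d) m (G : 'I_m -> F) :
  (forall i, Img (ts_form b) (G i)) -> Img (ts_form b) (\sum_i G i).
Proof.
move=> H; apply: (big_ind (Img (ts_form b))) => //; [exact: img0| exact: imgD].
Qed.

Lemma imgN d (b : 'rV[F]_d) z : Img (ts_form b) z -> Img (ts_form b) (- z).
Proof. by rewrite oppr2. Qed.

Lemma stab_surj d (b : 'rV[F]_d) t : t != 0 ->
  (forall z, Img (ts_form b) z -> Img (ts_form b) (t * z)) ->
  forall z, Img (ts_form b) z -> exists2 u, Img (ts_form b) u & z = t * u.
Proof.
move=> t0 st z.
have [e [c [i [an _ E _]]]] := ts_decomp ch b.
have tc : forall x, ts_form (t *: c) x = t * ts_form c x.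
  by move=> x; rewrite /ts_form mulr_sumr; apply: eq_bigr => j _; rewrite mxE mulrA.
have an' : anisotropic (ts_form (t *: c)).
  by move=> x; rewrite tc => /eqP; rewrite mulf_eq0 (negPf t0) /= => /eqP /an.
have sub : forall z, Img (ts_form (t *: c)) z -> Img (ts_form c) z.
  move=> z' [x ->]; rewrite tc; apply/E; apply: st; apply/E; by exists x.
have [Y uY HY] := aniso_sq ch an' an sub.
move=> /E [y ->]; exists (ts_form c (y *m invmx Y)).
  by apply/E; exists (y *m invmx Y).
by rewrite -tc HY mulmxKV.
Qed.
End ImgClos.

Section Core.
Variables (F : fieldType) (L : fieldExtType F) (lam : L) (n : nat).
Hypotheses (chF : 2%N \in [pchar F]) (gen : <<1; lam>>%VS = fullv)
  (sep : separable_element 1 lam) (dimL : \dim {:L} = n) (lam0 : lam != 0).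
Variables (d1 d2 : nat) (alpha : 'rV[F]_d1) (beta : 'rV[F]_d2).
Local Notation c2 := (coord (ptup n (lam ^+ 2))).
Local Notation pc := (coord (ptup n lam)).
Local Notation Vp := (Img (ts_form beta)).
Local Notation Wp := (Img (ts_form alpha)).
Local Notation Pp := (Img (ts_form (map_mx (in_alg L) beta))).
Local Notation Qp := (Img (ts_form (map_mx (in_alg L) alpha))).
Hypothesis HQP : forall x, Qp x <-> exists2 p, Pp p & x = lam * p.

Lemma n_gt0 : (0 < n)%N.
Proof. by rewrite -(adj_deg dimL gen). Qed.

Definition EF (t : F) := forall v, Vp v -> Vp (t * v).
Definition Egood (x : L) := forall j, EF (c2 j x).

Lemma EF0 : EF 0. Proof. by move=> v _; rewrite mul0r; exact: img0. Qed.
Lemma EF1 : EF 1. Proof. by move=> v; rewrite mul1r. Qed.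
Lemma EFD s t : EF s -> EF t -> EF (s + t).
Proof. by move=> Hs Ht v Hv; rewrite mulrDl; apply: imgD; auto. Qed.
Lemma EFM s t : EF s -> EF t -> EF (s * t).
Proof. by move=> Hs Ht v Hv; rewrite -mulrA; auto. Qed.
Lemma EFN t : EF t -> EF (- t).
Proof. by rewrite oppr2. Qed.
Lemma EFsq t : EF (t ^+ 2).
Proof. by move=> v Hv; apply: imgZ. Qed.
Lemma EFV t : t != 0 -> EF t -> EF t^-1.
Proof.
move=> t0 Ht v /(stab_surj chF t0 Ht) [u Hu ->].
by rewrite mulrA mulVf // mul1r.
Qed.
Lemma EF_sum m (G : 'I_m -> F) : (forall i, EF (G i)) -> EF (\sum_i G i).
Proof. by move=> H; apply: (big_ind EF) => //; [exact: EF0 | exact: EFD]. Qed.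
Lemma EF_prod m (G : 'I_m -> F) (P : pred 'I_m) :
  (forall i, EF (G i)) -> EF (\prod_(i | P i) G i).
Proof. by move=> H; apply: (big_ind EF) => //; [exact: EF1 | exact: EFM]. Qed.

Lemma c2_alg (c : F) j : c2 j c%:A = c * (val j == 0%N)%:R.
Proof. exact: (ptup_alg dimL c j (gen2 chF gen sep) n_gt0). Qed.

Lemma Pp_alg (v : F) : Vp v -> Pp v%:A.
Proof.
move=> Hv; apply/(imgL chF gen sep dimL) => j; rewrite c2_alg.
by case: (_ == _); rewrite ?mulr1 ?mulr0 //; exact: img0.
Qed.

Lemma Qp_alg (v : F) : Wp v -> Qp v%:A.
Proof.
move=> Hv; apply/(imgL chF gen sep dimL) => j; rewrite c2_alg.
by case: (_ == _); rewrite ?mulr1 ?mulr0 //; exact: img0.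
Qed.

Lemma Pp_sq (y p : L) : Pp p -> Pp ((y ^+ 2) * p).
Proof.
move=> [z ->]; exists (y *: z); rewrite tsZ //; exact: chL chF.
Qed.

Lemma Pp_EF (t : F) p : EF t -> Pp p -> Pp (t *: p).
Proof.
move=> Ht /(imgL chF gen sep dimL) Hp; apply/(imgL chF gen sep dimL) => j.
by rewrite linearZ /=; apply: Ht.
Qed.

Lemma Pp_sum m (G : 'I_m -> L) : (forall i, Pp (G i)) -> Pp (\sum_i G i).
Proof.
move=> H; apply: (big_ind Pp) => //.
  by exists 0; rewrite ts0.
by move=> x y [a ->] [b ->]; exists (a + b); rewrite tsD //; exact: chL chF.
Qed.

Lemma EgoodP x : Egood x <-> forall p, Pp p -> Pp (x * p).
Proof.
split.
  move=> Hx p Hp.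
  rewrite (ptup_expand dimL x (gen2 chF gen sep)) mulr_suml.
  apply: Pp_sum => i; rewrite -scalerAl; apply: Pp_EF; first exact: Hx.
  by rewrite -exprM mulnC exprM; apply: Pp_sq.
move=> H j v Hv.
have := H _ (Pp_alg Hv); rewrite mulr_algr => /(imgL chF gen sep dimL) /(_ j).
by rewrite linearZ /= mulrC.
Qed.

Lemma Egood1 : Egood 1.
Proof. by apply/EgoodP => p; rewrite mul1r. Qed.

Lemma EgoodM x y : Egood x -> Egood y -> Egood (x * y).
Proof.
move=> /EgoodP Hx /EgoodP Hy; apply/EgoodP => p Hp; rewrite -mulrA; auto.
Qed.

Lemma EgoodX x m : Egood x -> Egood (x ^+ m).
Proof.
move=> Hx; elim: m => [|m IH]; first by rewrite expr0; exact: Egood1.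
by rewrite exprS; apply: EgoodM.
Qed.

Lemma c2_nz (x : L) : x != 0 -> exists j, c2 j x != 0.
Proof.
move=> x0; case: (pickP (fun j => c2 j x != 0)) => [j Hj|H]; first by exists j.
exfalso; move: x0; rewrite (ptup_expand dimL x (gen2 chF gen sep)) big1 ?eqxx //.
by move=> i _; move: (H i) => /negbFE /eqP ->; rewrite scale0r.
Qed.

Lemma mu_exists : exists mu, [/\ mu != 0,
  (forall w, Wp w <-> exists2 v, Vp v & w = mu * v) & Egood (mu^-1 *: lam)].
Proof.
have [j0 mu0] := c2_nz lam0; set mu := c2 j0 lam.
have lamV0 : lam^-1 != 0 by rewrite invr_eq0.
have [j1 nu0] := c2_nz lamV0; set nu := c2 j1 lam^-1.
have HmuV : forall v, Vp v -> Wp (mu * v).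
  move=> v Hv; have := Pp_alg Hv => Hp.
  have : Qp (lam * v%:A) by apply/HQP; exists v%:A.
  rewrite mulr_algr => /(imgL chF gen sep dimL) /(_ j0).
  by rewrite linearZ /= mulrC.
have HnuW : forall w, Wp w -> Vp (nu * w).
  move=> w Hw; have := Qp_alg Hw => /HQP [p Hp e].
  have ep : p = w *: lam^-1 by rewrite -mulr_algr e mulrA mulVf // mul1r.
  move: Hp; rewrite ep => /(imgL chF gen sep dimL) /(_ j1).
  by rewrite linearZ /= mulrC.
have HW : forall w, Wp w <-> exists2 v, Vp v & w = mu * v.
  move=> w; split; last by move=> [v Hv ->]; exact: HmuV.
  move=> Hw.
  have st : EF (nu * mu) by move=> v Hv; rewrite -mulrA; apply: HnuW; exact: HmuV.
  have nm0 : nu * mu != 0 by rewrite mulf_neq0.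
  have [u Hu e] := stab_surj chF nm0 st (HnuW _ Hw).
  exists u => //; apply: (mulfI nu0); by rewrite e mulrA.
exists mu; split => //.
apply/EgoodP => p Hp.
have : Qp (lam * p) by apply/HQP; exists p.
move=> /(imgL chF gen sep dimL) Hq.
apply/(imgL chF gen sep dimL) => j.
have [v Hv e] := (proj1 (HW _)) (Hq j).
by rewrite -scalerAl linearZ /= e mulrA mulVf // mul1r.
Qed.

Section Mu.
Variable mu : F.
Hypotheses (mu0 : mu != 0) (Egb : Egood (mu^-1 *: lam)).
Local Notation be := (mu^-1 *: lam).

Definition Cm : 'M[F]_n := \matrix_(i, j) c2 j (be ^+ i).

Lemma Cm_free : row_free Cm.
Proof.
rewrite -kermx_eq0; apply/eqP/row_matrixP => i; rewrite row0.
set r := row i (kermx Cm).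
have rC : r *m Cm = 0 by rewrite /r -row_mul mulmx_ker row0.
set y := \sum_k (r 0 k * mu^-1 ^+ k) *: lam ^+ k.
have y0 : y = 0.
  apply: (ptup_eq dimL (gen2 chF gen sep)) => j; rewrite linear0.
  have := congr1 (fun M : 'rV_n => M 0 j) rC; rewrite !mxE => <-.
  rewrite /y linear_sum; apply: eq_bigr => k _.
  by rewrite linearZ /= !mxE exprZn linearZ /= mulrA.
apply/rowP => k.
have := congr1 (pc k) y0; rewrite /y (ptup_coord dimL (fun k => r 0 k * mu^-1 ^+ k) k gen).
rewrite linear0 => /eqP.
by rewrite mulf_eq0 expf_eq0 invr_eq0 (negPf mu0) andbF orbF => /eqP ->; rewrite mxE.
Qed.

Lemma Cm_det : \det Cm != 0.
Proof. by have := Cm_free; rewrite row_free_unit unitmxE unitfE. Qed.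

Lemma EF_Cm i j : EF (Cm i j).
Proof. by rewrite mxE; apply: EgoodX. Qed.

Lemma EF_det (A : 'M[F]_n) : (forall i j, EF (A i j)) -> EF (\det A).
Proof.
move=> H; rewrite /determinant; apply: (big_ind EF); [exact: EF0|exact: EFD|].
move=> s _; apply: EFM; last exact: EF_prod.
case: (perm.odd_perm s); [rewrite expr1; exact: (EFN EF1) | rewrite expr0; exact: EF1].
Qed.

Lemma EF_cof (A : 'M[F]_n) i j : (forall i j, EF (A i j)) -> EF (cofactor A i j).
Proof.
move=> H; rewrite expand_cofactor; apply: (big_ind EF); [exact: EF0|exact: EFD|].
move=> s _; apply: EFM; last exact: EF_prod.
case: (perm.odd_perm s); [rewrite expr1; exact: (EFN EF1) | rewrite expr0; exact: EF1].
Qed.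

Lemma key x : Egood x -> forall i, EF (pc i x * mu ^+ i).
Proof.
move=> Hx i.
set cx := \row_j c2 j x.
set e := (\det Cm)^-1 *: (cx *m \adj Cm).
have eC : e *m Cm = cx.
  rewrite /e -scalemxAl -mulmxA mul_adj_mx mul_mx_scalar scalerA mulVf ?scale1r //.
  exact: Cm_det.
have EFe : forall k, EF (e 0 k).
  move=> k; rewrite /e mxE; apply: EFM.
    by apply: EFV; [exact: Cm_det | apply: EF_det => ? ?; exact: EF_Cm].
  rewrite mxE; apply: EF_sum => l; apply: EFM; first by rewrite mxE; exact: Hx.
  by rewrite mxE; apply: EF_cof => ? ?; exact: EF_Cm.
have xe : x = \sum_k (e 0 k * mu^-1 ^+ k) *: lam ^+ k.
  apply: (ptup_eq dimL (gen2 chF gen sep)) => j.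
  have := congr1 (fun M : 'rV_n => M 0 j) eC; rewrite !mxE => <-.
  rewrite linear_sum; apply: eq_bigr => k _.
  by rewrite linearZ /= !mxE exprZn linearZ /= mulrA.
rewrite xe (ptup_coord dimL (fun k => e 0 k * mu^-1 ^+ k) i gen).
by rewrite -mulrA -exprMn mulVf // expr1n mulr1.
Qed.

Lemma lam_be m : lam ^+ m = mu ^+ m *: be ^+ m.
Proof. by rewrite -exprZn scalerA mulfV // scale1r. Qed.

Lemma pc_lamX m i : exists2 t, EF t & pc i (lam ^+ m) * mu ^+ i = mu ^+ m * t.
Proof.
exists (pc i (be ^+ m) * mu ^+ i); first by apply: key; apply: EgoodX.
by rewrite lam_be linearZ /= mulrA.
Qed.

Lemma EF_par r t : EF t ->
  if odd r then exists2 u, EF u & mu ^+ r * t = mu * u else EF (mu ^+ r * t).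
Proof.
move=> Ht; have := odd_double_half r; set h := r./2; case: (odd r) => /= er.
  exists ((mu ^+ h) ^+ 2 * t); first by apply: EFM => //; exact: EFsq.
  by rewrite -er exprD expr1 -mul2n exprM -mulrA exprAC.
by rewrite -er add0n -mul2n exprM exprAC; apply: EFM => //; exact: EFsq.
Qed.
End Mu.
End Core.


Section Final1.
Variable F : fieldType.
Hypothesis ch : 2%N \in [pchar F].

Lemma img_scale d (b : 'rV[F]_d) c z :
  Img (qscale c (ts_form b)) z <-> exists2 v, Img (ts_form b) v & z = c * v.
Proof.
split; first by move=> [x ->]; exists (ts_form b x) => //; exists x.
by move=> [v [x ->] ->]; exists x.
Qed.

Lemma scale_ts d (b : 'rV[F]_d) c : qscale c (ts_form b) =1 ts_form (c *: b).
Proof.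
by move=> x; rewrite /qscale /ts_form mulr_sumr; apply: eq_bigr => i _; rewrite mxE mulrA.
Qed.

Lemma G0_ts d1 d2 (b1 : 'rV[F]_d1) (b2 : 'rV[F]_d2) c : d1 = d2 ->
  G0 (ts_form b1) (ts_form b2) c <-> c = 0 \/ (c != 0 /\
     forall z, Img (ts_form b1) z <-> exists2 v, Img (ts_form b2) v & z = c * v).
Proof.
move=> dd; split => [[->|[c0 I]]|[->|[c0 I]]]; [by left| |by left|].
  by right; split => // z; rewrite -img_scale; exact: qiso_img I z.
right; split => //; apply: qiso_ext (fun x => esym (scale_ts b2 c x)) _.
apply: ts_iso => // z; rewrite I -img_scale.
by split => -[x ->]; exists x; rewrite scale_ts.
Qed.

Lemma stab_eq d (b : 'rV[F]_d) c : c != 0 ->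
  (forall z, Img (ts_form b) z <-> exists2 v, Img (ts_form b) v & z = c * v) <->
  (forall v, Img (ts_form b) v -> Img (ts_form b) (c * v)).
Proof.
move=> c0; split => [H v Hv|H z]; first by apply/H; exists v.
split; first exact: stab_surj.
by move=> [v Hv ->]; exact: H.
Qed.

Lemma witt_r (V W W' : vectType F) (q1 : V -> F) (q2 : W -> F) (q2' : W' -> F) :
  witt_equiv q1 q2 -> qiso q2' q2 -> witt_equiv q1 q2'.
Proof.
move=> [e [i [j [rho [an I1 I2]]]]] I; exists e, i, j, rho; split => //.
exact: qiso_trans I I2.
Qed.

Lemma witt_l (V V' W : vectType F) (q1 : V -> F) (q1' : V' -> F) (q2 : W -> F) :
  witt_equiv q1 q2 -> qiso q1' q1 -> witt_equiv q1' q2.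
Proof.
move=> [e [i [j [rho [an I1 I2]]]]] I; exists e, i, j, rho; split => //.
exact: qiso_trans I I1.
Qed.
End Final1.

Lemma lin_dim (K : fieldType) m1 m2 (g : {linear 'rV[K]_m1 -> 'rV[K]_m2}) :
  injective g -> (m1 <= m2)%N.
Proof.
move=> ig; have : row_free (lin1_mx g).
  rewrite -kermx_eq0; apply/eqP/row_matrixP => i; rewrite row0.
  apply: ig; rewrite linear0 -mul_rV_lin1 -row_mul mulmx_ker row0 //.
rewrite /row_free => /eqP <-; exact: rank_leq_col.
Qed.

Lemma qiso_dim (K : fieldType) m1 m2 (q1 : 'rV[K]_m1 -> K) (q2 : 'rV[K]_m2 -> K) :
  qiso q1 q2 -> m1 = m2.
Proof.
move=> I; have [f [[g fK _] _]] := I; have [f' [[g' fK' _] _]] := qiso_sym I.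
apply/eqP; rewrite eqn_leq (lin_dim (can_inj fK)) (lin_dim (can_inj fK')) //.
Qed.


Section Main.
Variables (F : fieldType) (L : fieldExtType F) (lam : L) (n : nat) (s : L -> F).
Hypotheses (chF : 2%N \in [pchar F]) (gen : <<1; lam>>%VS = fullv)
  (sep : separable_element 1 lam) (dimL : \dim {:L} = n).
Hypotheses (sD : forall x y, s (x + y) = s x + s y)
  (sZ : forall (c : F) (x : L), s (c *: x) = c * s x) (s1 : s 1 = 1)
  (slam : forall i, (1 <= i < n)%N -> s (lam ^+ i) = 0).
Local Notation pc := (coord (ptup n lam)).

Lemma s0 : s 0 = 0.
Proof. by have := sZ 0 0; rewrite scale0r mul0r. Qed.

Lemma s_sum m (G : 'I_m -> L) : s (\sum_i G i) = \sum_i s (G i).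
Proof. exact: (big_morph s sD s0). Qed.

Lemma s_alg (c : F) : s c%:A = c.
Proof. by rewrite sZ s1 mulr1. Qed.

Lemma s_pc x : s x = pc (Ordinal (n_gt0 gen dimL)) x.
Proof.
rewrite {1}(ptup_expand dimL x gen) s_sum (bigD1 (Ordinal (n_gt0 gen dimL))) //=.
rewrite big1 ?addr0 ?sZ ?expr0 ?s1 ?mulr1 // => i ni.
rewrite sZ slam ?mulr0 //; rewrite ltn_ord andbT lt0n.
by apply: contra ni => /eqP e; apply/eqP/val_inj.
Qed.

Lemma f_coef (f : {poly F}) : map_poly (in_alg L) f = minPoly 1 lam ->
  forall i : 'I_n, pc i (lam ^+ n) = - f`_i.
Proof.
move=> fm i.
have sz : size (minPoly 1 lam) = n.+1 by rewrite size_minPoly (adj_deg dimL gen).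
have := minPolyxx 1 lam; rewrite horner_coef sz big_ord_recr /=.
have -> : (minPoly 1 lam)`_n = 1.
  by have := monicP (monic_minPoly 1 lam); rewrite lead_coefE sz.
rewrite mul1r => /eqP; rewrite addrC addr_eq0 => /eqP ->.
have -> : - \sum_(j < n) (minPoly 1 lam)`_j * lam ^+ j =
          \sum_(j < n) (- f`_j) *: lam ^+ j.
  rewrite -sumrN; apply: eq_bigr => j _.
  by rewrite -fm coef_map /= mulr_algl scaleNr.
by rewrite ptup_coord.
Qed.
End Main.

Section Ext.
Variables (F : fieldType) (L : fieldExtType F).
Hypothesis chL : 2%N \in [pchar L].

Lemma ts_ext_row d (b : 'rV[F]_d) (y : {ffun 'I_d -> L}) :
  ts_ext b y = ts_form (map_mx (in_alg L) b) (\row_i y i).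
Proof. by rewrite /ts_ext /ts_form; apply: eq_bigr => i _; rewrite !mxE. Qed.

Lemma img_ext d (b : 'rV[F]_d) x :
  (exists y, x = ts_ext b y) <-> Img (ts_form (map_mx (in_alg L) b)) x.
Proof.
split => [[y ->]|[r ->]]; first by exists (\row_i y i); rewrite ts_ext_row.
exists [ffun i => r 0 i]; rewrite ts_ext_row; congr ts_form.
by apply/rowP => i; rewrite !mxE ffunE.
Qed.

Lemma ts_extD d (b : 'rV[F]_d) (x y : {ffun 'I_d -> L}) : ts_ext b (x + y) = ts_ext b x + ts_ext b y.
Proof.
rewrite /ts_ext -big_split; apply: eq_bigr => i _.
by rewrite ffunE sqrD2 // mulrDr.
Qed.

Lemma ts_extZ d (b : 'rV[F]_d) (c : F) (x : {ffun 'I_d -> L}) : ts_ext b (c *: x) = c ^+ 2 *: ts_ext b x.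
Proof.
rewrite /ts_ext scaler_sumr; apply: eq_bigr => i _.
by rewrite ffunE exprZn -scalerAr.
Qed.
End Ext.

Lemma transfer_ql (F : fieldType) (L : fieldExtType F) (V : vectType F)
  (s : L -> F) (q : V -> L) :
  (forall x y, s (x + y) = s x + s y) -> (forall (c : F) (x : L), s (c *: x) = c * s x) ->
  (forall x y, q (x + y) = q x + q y) -> (forall (c : F) x, q (c *: x) = c ^+ 2 *: q x) ->
  (forall x y, transfer s q (x + y) = transfer s q x + transfer s q y) /\
  (forall c x, transfer s q (c *: x) = c ^+ 2 * transfer s q x).
Proof. by move=> sD sZ qD qZ; split => *; rewrite /transfer ?qD ?qZ ?sD ?sZ. Qed.


Unset Implicit Arguments. Set Strict Implicit.

Theorem lemma6p4 (F : fieldType) (L : fieldExtType F) (lam : L) (n : nat)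
  (f : {poly F}) (k : nat) (a : F) (s : L -> F)
  (d1 d2 : nat) (alpha : 'rV[F]_d1) (beta : 'rV[F]_d2) :
  2%N \in [pchar F] ->
  <<1; lam>>%VS = fullv ->
  separable_element 1%VS lam ->
  lam != 0 ->
  \dim {:L} = n ->
  map_poly (in_alg L) f = minPoly 1 lam ->
  odd k -> (1 <= k <= n)%N -> a = f`_(n - k) -> a != 0 ->
  (forall x y, s (x + y) = s x + s y) ->
  (forall (c : F) (x : L), s (c *: x) = c * s x) ->
  s 1 = 1 ->
  (forall i, (1 <= i < n)%N -> s (lam ^+ i) = 0) ->
  (* phi_K ~= lam psi_K over L *)
  qiso (ts_form (map_mx (in_alg L) alpha))
       (qscale lam (ts_form (map_mx (in_alg L) beta))) ->
  [/\ (forall c, G0 (ts_form alpha) (ts_form alpha) c <->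
                 G0 (ts_form beta) (ts_form beta) c),
      (forall c, G0 (ts_form alpha) (ts_form beta) c <->
                 exists2 c', G0 (ts_form beta) (ts_form beta) c' & c = a * c'),
      (forall m : nat,
         (~~ odd m -> G0 (ts_form beta) (ts_form beta) (s (lam ^+ m))) /\
         (odd m -> G0 (ts_form alpha) (ts_form beta) (s (lam ^+ m))))
    & [/\ witt_equiv (ts_form alpha) (transfer s (ts_ext alpha)),
      qiso (transfer s (ts_ext alpha))
           (transfer s (fun x => lam * ts_ext beta x))
    & witt_equiv (transfer s (fun x => lam * ts_ext beta x))
                 (qscale a (ts_form beta))]].
Proof.
move=> chF gen sep lam0 dimL fmin kodd /andP[k1 kn] Ha a0 sD sZ s1 slam iso.
have chL' := chL L chF.
have dd : d1 = d2 := qiso_dim iso.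
have HQP : forall x, Img (ts_form (map_mx (in_alg L) alpha)) x <->
    exists2 p, Img (ts_form (map_mx (in_alg L) beta)) p & x = lam * p.
  by move=> x; rewrite (qiso_img iso) img_scale.
have [mu [mu0 HW Egb]] := mu_exists chF gen sep dimL lam0 HQP.
pose n0 := n_gt0 gen dimL.
have Hs : forall m, exists2 t, EF beta t & s (lam ^+ m) = mu ^+ m * t.
  move=> m; have [t Ht e] := pc_lamX chF gen sep dimL mu0 Egb m (Ordinal n0).
  by exists t => //; rewrite (s_pc gen dimL sD sZ s1 slam) -e /= expr0 mulr1.
have Hme : forall m, ~~ odd m -> EF beta (s (lam ^+ m)).
  move=> m om; have [t Ht ->] := Hs m; have := EF_par mu m Ht.
  by rewrite (negPf om).
have Hmo : forall m, odd m -> exists2 u, EF beta u & s (lam ^+ m) = mu * u.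
  move=> m om; have [t Ht ->] := Hs m; have := EF_par mu m Ht.
  by rewrite om.
have [u Hu au] : exists2 u, EF beta u & a = mu * u.
  have nk : (n - k < n)%N by rewrite ltn_subrL k1 (leq_trans k1 kn).
  have [t Ht e] := pc_lamX chF gen sep dimL mu0 Egb n (Ordinal nk).
  move: e; rewrite (f_coef gen dimL fmin) /= -Ha.
  rewrite -{2}(subnKC kn) exprD mulrAC => /(mulIf (expf_neq0 _ mu0)) ea.
  have := EF_par mu k (EFN chF Ht); rewrite kodd => -[u Hu eu].
  by exists u => //; rewrite -eu mulrN -ea opprK.
have u0 : u != 0 by apply: contraNneq a0 => u0; rewrite au u0 mulr0.
have HWa : forall w, Img (ts_form alpha) w <->
    exists2 v, Img (ts_form beta) v & w = a * v.
  move=> w; rewrite HW; split => -[v Hv ->].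
    have [v' Hv' ->] := stab_surj chF u0 Hu Hv.
    by exists v' => //; rewrite au mulrA.
  by exists (u * v); [exact: Hu | rewrite au mulrA].
have stW : forall c, (forall w, Img (ts_form alpha) w -> Img (ts_form alpha) (c * w))
    <-> EF beta c.
  move=> c; split => H.
    move=> v Hv; have := H (mu * v) (proj2 (HW _) (ex_intro2 _ _ v Hv erefl)).
    move=> /HW [v' Hv' e]; suff -> : c * v = v' by [].
    by apply: (mulfI mu0); rewrite mulrCA e.
  move=> w /HW [v Hv ->]; apply/HW; exists (c * v); first exact: H.
  by rewrite mulrCA.
split.
- move=> c; rewrite !G0_ts //.
  split => -[->|[c0 Hc]]; [by left| |by left|]; right; split => //.
    by apply: (proj2 (@stab_eq F chF _ beta _ c0)); apply/stW; exact: (proj1 (@stab_eq F chF _ alpha _ c0) Hc).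
  by apply: (proj2 (@stab_eq F chF _ alpha _ c0)); apply/stW; exact: (proj1 (@stab_eq F chF _ beta _ c0) Hc).
- move=> c; rewrite G0_ts //; split.
    move=> [->|[c0 Hc]]; first by exists 0; [rewrite G0_ts //; left | rewrite mulr0].
    exists (c / a); last by rewrite mulrC divfK.
    have ca0 : c / a != 0 by apply: (@mulf_neq0 F) => //; rewrite invr_eq0.
    rewrite G0_ts //; right; split => //.
    apply: (proj2 (@stab_eq F chF _ beta _ ca0)).
    move=> v Hv; have /HWa [v' Hv' e] : Img (ts_form alpha) (c * v).
      by apply/Hc; exists v.
    by rewrite mulrAC e mulrAC mulfV // mul1r.
  move=> [c' ]; rewrite G0_ts // => -[->|[c0 Hc]] ->; first by left; rewrite mulr0.
  right; split; first by rewrite mulf_eq0 negb_or c0 a0.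
  move=> z; rewrite HWa; split => -[v Hv ->].
    by have /Hc [v' Hv' ->] := Hv; exists v' => //; rewrite mulrA.
  by exists (c' * v); [apply/Hc; exists v | rewrite mulrA].
- move=> m; split => om.
    rewrite G0_ts //; have [->|s0] := eqVneq (s (lam ^+ m)) 0; first by left.
    by right; split => //; apply: (proj2 (@stab_eq F chF _ beta _ s0)); exact: Hme.
  have [u' Hu' e] := Hmo m om.
  rewrite G0_ts //; have [->|s0] := eqVneq (s (lam ^+ m)) 0; first by left.
  have u'0 : u' != 0 by apply: contraNneq s0 => eu; rewrite e eu mulr0.
  right; split => // z; rewrite HW e; split => -[v Hv ->].
    have [v' Hv' ->] := stab_surj chF u'0 Hu' Hv.
    by exists v' => //; rewrite mulrA.
  by exists (u' * v); [exact: Hu' | rewrite mulrA].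
have ImgQ : forall z, (exists2 x, Img (ts_form (map_mx (in_alg L) alpha)) x & z = s x)
    <-> Img (ts_form alpha) z.
  move=> z; split.
    move=> [x Hx ->].
    rewrite (ptup_expand dimL x (gen2 chF gen sep)) (s_sum sD sZ).
    apply: (img_sum chF) => j; rewrite sZ mulrC.
    apply: (proj2 (stW _)); last exact: (proj1 (imgL chF gen sep dimL alpha x) Hx j).
    by rewrite -exprM; apply: Hme; rewrite oddM.
  move=> Hz; exists z%:A; first exact: (Qp_alg chF gen sep dimL Hz).
  by rewrite (s_alg sZ s1).
have imgT1 : forall z, Img (transfer s (ts_ext alpha)) z <-> Img (ts_form alpha) z.
  move=> z; rewrite -ImgQ; split.
    move=> [y ->]; exists (ts_ext alpha y) => //; apply/img_ext; by exists y.
  by move=> [x /img_ext [y ->] ->]; exists y.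
have imgT2 : forall z, Img (transfer s (fun x => lam * ts_ext beta x)) z <->
    Img (ts_form alpha) z.
  move=> z; rewrite -ImgQ; split.
    move=> [y ->]; exists (lam * ts_ext beta y) => //; apply/HQP.
    by exists (ts_ext beta y) => //; apply/img_ext; exists y.
  by move=> [x /HQP [p /img_ext [y ->] ->] ->]; exists y.
have [b1 I1] : exists b1 : 'rV[F]_(\dim {:{ffun 'I_d1 -> L}}),
    qiso (transfer s (ts_ext alpha)) (ts_form b1).
  have [qD qZ] := transfer_ql sD sZ (fun x y => ts_extD chL' alpha x y)
    (fun c x => ts_extZ alpha c x).
  exact: qlin_ts qD qZ.
have [b2 I2] : exists b2 : 'rV[F]_(\dim {:{ffun 'I_d2 -> L}}),
    qiso (transfer s (fun x => lam * ts_ext beta x)) (ts_form b2).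
  have [qD qZ] := transfer_ql (q := fun x => lam * ts_ext beta x) sD sZ
    (fun x y => etrans (congr1 _ (ts_extD chL' beta x y)) (mulrDr _ _ _))
    (fun c x => etrans (congr1 _ (ts_extZ beta c x)) (esym (scalerAr _ _ _))).
  exact: qlin_ts qD qZ.
split.
- apply: (witt_r _ I1); apply: (ts_witt chF) => z.
  by rewrite -(qiso_img I1) imgT1.
- have [g [[g' gK g'K] Hg]] := iso.
  have rowD : forall m (x y : {ffun 'I_m -> L}) (c : F),
      \row_j (c *: x + y) j = (c%:A : L) *: \row_j x j + \row_j y j.
    by move=> m x y c; apply/rowP => j; rewrite !mxE !ffunE mulr_algl.
  have [h Hh] : exists h : {linear {ffun 'I_d1 -> L} -> {ffun 'I_d2 -> L}},
      forall x, h x = [ffun i => g (\row_j x j) 0 i].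
    apply: mklin => c x y; apply/ffunP => i.
    by rewrite [LHS]ffunE rowD linearP /= !ffunE !mxE mulr_algl.
  have rowh : forall x, \row_i (h x) i = g (\row_j x j).
    by move=> x; apply/rowP => i; rewrite !mxE Hh ffunE.
  exists h; split.
    exists (fun y : {ffun 'I_d2 -> L} => [ffun j => g' (\row_i y i) 0 j]) => x; apply/ffunP => j.
      by rewrite ffunE rowh gK mxE.
    rewrite Hh ffunE.
    have -> : \row_j [ffun j => g' (\row_i x i) 0 j] j = g' (\row_i x i).
      by apply/rowP => i; rewrite !mxE ffunE.
    by rewrite g'K mxE.
  move=> x; rewrite /transfer ts_ext_row rowh.
  by have := Hg (\row_j x j); rewrite /qscale => ->; rewrite ts_ext_row.
- apply: (witt_l _ I2).
  have I3 : qiso (qscale a (ts_form beta)) (ts_form (a *: beta)).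
    exact: qiso_ext (scale_ts beta a) (qiso_refl _).
  apply: (witt_r _ I3); apply: (ts_witt chF) => z.
  rewrite -(qiso_img I2) imgT2 HWa -(qiso_img I3) img_scale //.
Qed.
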